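(* Let $K$ be a set of $n$ distinct keys from a totally ordered set, and let $L'$ be a uniformly random ordering of $K$, written $L' = a :: L$ (so $a$ is the first key of $L'$ and $L$ is the list of the remaining $n-1$ keys). Run memoized Quicksort (as defined in the context) first on $L$ and then on $L'$, with the memo tables (for Quicksort and for hash-consing) shared between the two runs. Then the expected running time of the second run, on $L'$, is $O(n)$. The expectation is over the uniformly random ordering of the input and over the internal randomization of the hash functions used to implement the memo tables.
   Context: Quicksort on a list $\ell$ of distinct keys: if $\ell$ is empty, return the empty list; otherwise $\ell = h :: t$, the pivot is $h$, one computes $s = $ the sublist of $t$ of keys $< h$ and $g = $ the sublist of $t$ of keys $\geq h$ (both by filtering $t$, which preserves the relative order of keys and takes time linear in the length of $t$), recursively sorts $s$ and $g$, and returns $\mathrm{sort}(s) \mathbin{@} (h :: \mathrm{sort}(g))$. Memoized Quicksort is the same algorithm in which (i) the lists produced by filtering are built with hash-consing, so that structurally equal lists are represented by the same object and can be compared and hashed in expected $O(1)$ time, each hash-consing step costing expected $O(1)$ time; and (ii) every recursive call first looks up its argument list in a memo table (keyed by the argument list, lookup and update costing expected $O(1)$ time); if a result for an equal list is stored there, that result is returned immediately, otherwise the call is executed and its result is stored. Running time counts elementary operations, with each memo-table operation and each hash-consing operation costing expected constant time. *)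

(* Defs.v *)
From mathcomp Require Import all_boot all_order.
Set Implicit Arguments. Unset Strict Implicit. Unset Printing Implicit Defensive.
Import Order.TTheory.
Local Open Scope order_scope.

Section MemoQuicksort.
Variables (d : Order.disp_t) (T : orderType d).

(* The Quicksort memo table: a list of (argument, result) pairs.
   Lists are hash-consed, so comparing/looking them up is a unit-cost
   operation in the cost model below. *)
Definition memo := seq (seq T * seq T).

Definition memo_lookup (M : memo) (l : seq T) : option (seq T) :=
  ohead [seq p.2 | p <- M & p.1 == l].

(* Cost model (elementary operations, each memo/hash-consing op = 1):
   - 1 for the memo lookup; on a hit, nothing else;
   - on a miss with l = [::]: 1 more for storing the result;
   - on a miss with l = h :: t: size t for traversing t while filtering,
     size s + size g hash-consing steps for building s and g,
     the costs of the two recursive calls (s first, then g, memo threaded),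
     size (sort s) for the append, 1 for the cons h :: _, 1 for the store.
   The fuel is only a termination device; [mqs_run] supplies enough fuel. *)
Fixpoint mqs (fuel : nat) (M : memo) (l : seq T) : seq T * memo * nat :=
  match fuel with
  | 0 => (l, M, 0)
  | f.+1 =>
    match memo_lookup M l with
    | Some r => (r, M, 1)
    | None =>
      match l with
      | [::] => ([::], (l, [::]) :: M, 2)
      | h :: t =>
        let s := [seq x <- t | x < h] in
        let g := [seq x <- t | h <= x] in
        let '(rs, M1, c1) := mqs f M s in
        let '(rg, M2, c2) := mqs f M1 g in
        let r := rs ++ h :: rg in
        (r, (l, r) :: M2,
         1 + (size t + (size s + size g)) + c1 + c2 + size rs + 1 + 1)%N
      end
    end
  end.

Definition mqs_run (M : memo) (l : seq T) := mqs (size l).+1 M l.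

Definition second_run_cost (L' : seq T) : nat :=
  match L' with
  | [::] => 0
  | a :: L => let '(_, M1, _) := mqs_run [::] L in (mqs_run M1 (a :: L)).2
  end.

End MemoQuicksort.

(* Main.v *)
Require Import Defs.
From mathcomp Require Import all_boot all_order zify.
Set Implicit Arguments. Unset Strict Implicit. Unset Printing Implicit Defensive.
Import Order.TTheory.

Definition keys {d} {T : orderType d} (M : memo T) : seq (seq T) := [seq p.1 | p <- M].
Definition good {d} {T : orderType d} (M : memo T) : bool :=
  all (fun p : seq T * seq T => size p.2 == size p.1) M.
Definition closed1 {d} {T : orderType d} (M : memo T) : Prop :=
  forall k, k \in keys M -> match k with [::] => True
   | h :: t => [seq x <- t | (x < h)%O] \in keys M /\ [seq x <- t | (h <= x)%O] \in keys M end.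

Lemma size_filter_le {T : Type} (a : pred T) (s : seq T) : size (filter a s) <= size s.
Proof. by rewrite size_filter count_size. Qed.

Lemma lookup_cons {d} {T : orderType d} (p : seq T * seq T) (M : memo T) l :
  memo_lookup (p :: M) l = if p.1 == l then Some p.2 else memo_lookup M l.
Proof. by rewrite /memo_lookup /=; case: (p.1 == l). Qed.

Lemma lookup_None {d} {T : orderType d} (M : memo T) l :
  (memo_lookup M l == None) = (l \notin keys M).
Proof.
elim: M => [|p M' IH] //; rewrite lookup_cons /= inE.
by case: (p.1 =P l) => [->|] /=; [rewrite eqxx | move=> ne; rewrite IH; case: eqP => // E; case: ne].
Qed.

Lemma lookup_Some {d} {T : orderType d} (M : memo T) l r :
  good M -> memo_lookup M l = Some r -> size r = size l.
Proof.
elim: M => [|p M' IH] //; rewrite lookup_cons /= => /andP [/eqP Hp gM].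
by case: eqP => [<- [<-] //|_]; apply: IH.
Qed.

Lemma mqs_inv {d} {T : orderType d} f (M : memo T) l :
  good M -> let: (r, M', c) := mqs f M l in
   [/\ good M', size r = size l & {subset keys M <= keys M'}].
Proof.
elim: f M l => [|f IH] M l gM /=; first by split.
case E: (memo_lookup M l) => [r|].
  by split => //; apply: lookup_Some E.
case: l E => [|h t] E /=.
  by split => // k kM; rewrite inE kM orbT.
case E1: (mqs f M _) => [[rs M1] c1].
have := IH M [seq x <- t | (x < h)%O] gM; rewrite E1 => -[g1 s1 sub1].
case E2: (mqs f M1 _) => [[rg M2] c2].
have := IH M1 [seq x <- t | (h <= x)%O] g1; rewrite E2 => -[g2 s2 sub2].
have Hsz : size (rs ++ h :: rg) = (size t).+1.
  rewrite size_cat /= s1 s2 !size_filter addnS; congr (_.+1).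
  rewrite -(count_predC (fun x => (x < h)%O) t); congr (_ + _).
  by apply: eq_count => x /=; rewrite -leNgt.
split => //.
- by apply/andP; split => //; rewrite Hsz.
- by move=> k kM; rewrite inE (sub2 _ (sub1 _ kM)) orbT.
Qed.

Lemma mqs_closed {d} {T : orderType d} f (M : memo T) l :
  good M -> closed1 M -> size l < f -> let: (r, M', c) := mqs f M l in
   closed1 M' /\ l \in keys M'.
Proof.
elim: f M l => [|f IH] M l gM cM lf /=; first by [].
case E: (memo_lookup M l) => [r|].
  split => //; have : memo_lookup M l != None by rewrite E.
  by rewrite lookup_None negbK.
case: l E lf => [|h t] E /= lf.
  split; last by rewrite inE eqxx.
  move=> k; rewrite inE => /orP [/eqP -> //|/cM].
  by case: k => // h' t' [A B]; rewrite !inE A B !orbT.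
case E1: (mqs f M _) => [[rs M1] c1].
have := mqs_inv f [seq x <- t | (x < h)%O] gM; rewrite E1 => -[g1 _ _].
have := IH M [seq x <- t | (x < h)%O] gM cM.
rewrite E1 => /(_ (leq_ltn_trans (size_filter_le _ _) lf)) [c1' k1].
case E2: (mqs f M1 _) => [[rg M2] c2].
have := mqs_inv f [seq x <- t | (h <= x)%O] g1; rewrite E2 => -[_ _ sub2].
have := IH M1 [seq x <- t | (h <= x)%O] g1 c1'.
rewrite E2 => /(_ (leq_ltn_trans (size_filter_le _ _) lf)) [c2' k2].
split; last by rewrite inE eqxx.
move=> k; rewrite inE => /orP [/eqP ->|kM].
  by split; rewrite inE ?k2 ?(sub2 _ k1) orbT.
have := c2' k kM; case: k {kM} => // h' t' [A B].
by rewrite !inE A B !orbT.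
Qed.

Fixpoint Bnd {d} {T : orderType d} (M1 : memo T) (f : nat) (l : seq T) : nat :=
  match f with 0 => 0 | f.+1 =>
    if l \in keys M1 then 1 else
    match l with [::] => 2
    | h :: t => 4 * size l + Bnd M1 f [seq x <- t | (x < h)%O] + Bnd M1 f [seq x <- t | (h <= x)%O]
    end end.

Lemma Bnd_cons {d} {T : orderType d} (M1 : memo T) f h t :
  Bnd M1 f.+1 (h :: t) <= 4 * size (h :: t) + Bnd M1 f [seq x <- t | (x < h)%O]
     + Bnd M1 f [seq x <- t | (h <= x)%O].
Proof. rewrite /=; case: ifP => // _; lia. Qed.

Lemma Bnd_nil {d} {T : orderType d} (M1 : memo T) f : Bnd M1 f [::] <= 2.
Proof. case: f => //= f; case: ifP => //. Qed.

Lemma Bnd_hit {d} {T : orderType d} (M1 : memo T) f l : l \in keys M1 -> Bnd M1 f.+1 l = 1.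
Proof. by move=> /= ->. Qed.

Lemma cost_arith (st z1 z2 sr c1 c2 A1 A2 : nat) : sr = z2 -> z1 <= st -> z2 <= st ->
  c1 <= A1 -> c2 <= A2 -> 1 + (st + (z2 + z1)) + c1 + c2 + sr + 1 + 1 <= 4 * st.+1 + A1 + A2.
Proof. lia. Qed.

Lemma cost_le {d} {T : orderType d} (M1 : memo T) f (M : memo T) l :
  good M -> {subset keys M1 <= keys M} -> (mqs f M l).2 <= Bnd M1 f l.
Proof.
elim: f M l => [|f IH] M l gM sub //=.
case E: (memo_lookup M l) => [r|] /=.
  by case: ifP => // _; case: l {E} => // h t; lia.
have nM : l \notin keys M by rewrite -lookup_None E.
have -> : (l \in keys M1) = false by apply/negP => /sub; apply/negP.
case: l {E nM} => [|h t] //=.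
case E1: (mqs f M _) => [[rs M1'] c1].
have := mqs_inv f [seq x <- t | (x < h)%O] gM; rewrite E1 => -[g1 s1 sub1].
have := IH M [seq x <- t | (x < h)%O] gM sub; rewrite E1 /= => le1.
case E2: (mqs f M1' _) => [[rg M2] c2] /=.
have := IH M1' [seq x <- t | (h <= x)%O] g1 (fun k kM => sub1 _ (sub k kM)); rewrite E2 /= => le2.
have H1 : size [seq x <- t | (x < h)%O] <= size t by apply: size_filter_le.
have H2 : size [seq x <- t | (h <= x)%O] <= size t by apply: size_filter_le.
exact: cost_arith s1 H2 H1 le1 le2.
Qed.

Definition firstin {T : eqType} (s : seq T) (y : T) (W : pred T) : bool :=
  ohead (filter W s) == Some y.

Definition Dgen {T : eqType} (A B : pred T) (W1 : T -> pred T) (W2 : T -> T -> pred T)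
  (r s : seq T) : nat :=
  \sum_(h <- r | A h) (firstin s h (W1 h) + 4 * \sum_(x <- r | B x) firstin s h (W2 h x)).

Definition DL {d} {T : orderType d} (a : T) (r s : seq T) :=
  Dgen (fun h => (h < a)%O) (fun x => (x < a)%O) (fun h y => (h <= y)%O && (y < a)%O)
    (fun h x y => (Order.min x h <= y)%O && (y < a)%O) r s.
Definition DR {d} {T : orderType d} (a : T) (r s : seq T) :=
  Dgen (fun h => (a < h)%O) (fun x => (a < x)%O) (fun h y => (a < y)%O && (y <= h)%O)
    (fun h x y => (a < y)%O && (y <= Order.max x h)%O) r s.

Lemma firstin_skip {T : eqType} (h : T) t y (W : pred T) :
  ~~ W h -> firstin (h :: t) y W = firstin t y W.
Proof. by rewrite /firstin /= => /negbTE ->. Qed.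

Lemma firstin_hit {T : eqType} (h : T) t (W : pred T) : W h -> firstin (h :: t) h W.
Proof. by rewrite /firstin /= => ->. Qed.

Lemma filter_sub {T : Type} (P Q : pred T) (s : seq T) :
  (forall x, P x -> Q x) -> filter P (filter Q s) = filter P s.
Proof.
move=> PQ; elim: s => [|x s IH] //=.
case Qx: (Q x) => /=; first by rewrite IH.
by case Px: (P x) => //; move: (PQ _ Px); rewrite Qx.
Qed.

Lemma filter_comm {T : Type} (P Q : pred T) (s : seq T) :
  filter P (filter Q s) = filter Q (filter P s).
Proof. by rewrite -!filter_predI; apply: eq_filter => x /=; rewrite andbC. Qed.

Lemma firstin_filter {T : eqType} (P W : pred T) s y :
  (forall z, W z -> P z) -> firstin (filter P s) y W = firstin s y W.
Proof. by move=> WP; rewrite /firstin filter_sub. Qed.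

Lemma sum_filter_le0 {T : eqType} (P Q : pred T) (F G : T -> nat) (t : seq T) :
  (forall x, x \in t -> P x -> Q x -> F x <= G x) ->
  \sum_(x <- filter P t | Q x) F x <= \sum_(x <- t | Q x) G x.
Proof.
elim: t => [|z t IH] FG; first by rewrite /= !big_nil.
have IH' : \sum_(x <- filter P t | Q x) F x <= \sum_(x <- t | Q x) G x.
  by apply: IH => x xt; apply: FG; rewrite inE xt orbT.
rewrite /= big_cons; case Pz: (P z); rewrite ?big_cons.
  case Qz: (Q z); last exact: IH'.
  by apply: leq_add => //; apply: FG; rewrite ?inE ?eqxx.
case: ifP => // _; exact: (leq_trans IH' (leq_addl _ _)).
Qed.

Lemma sum_filter_le {T : eqType} (P Q : pred T) (F G : T -> nat) h (t : seq T) :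
  (forall x, x \in t -> P x -> Q x -> F x <= G x) ->
  \sum_(x <- filter P t | Q x) F x <= \sum_(x <- h :: t | Q x) G x.
Proof.
move=> FG; apply: (leq_trans (sum_filter_le0 FG)).
rewrite big_cons; case: ifP => // _; exact: leq_addl.
Qed.

Definition term {T : eqType} (B : pred T) (W1 : T -> pred T) (W2 : T -> T -> pred T)
  (r s : seq T) (h : T) : nat :=
  firstin s h (W1 h) + 4 * \sum_(x <- r | B x) firstin s h (W2 h x).

Lemma Dgen_sub {T : eqType} (A B P : pred T) W1 W2 (h : T) (t : seq T) :
  (forall h', h' \in t -> P h' -> A h' ->
     firstin (filter P t) h' (W1 h') = firstin (h :: t) h' (W1 h')) ->
  (forall h' x, h' \in t -> x \in t -> P h' -> A h' -> P x -> B x ->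
     firstin (filter P t) h' (W2 h' x) = firstin (h :: t) h' (W2 h' x)) ->
  Dgen A B W1 W2 (filter P t) (filter P t) <=
  \sum_(h' <- t | A h') term B W1 W2 (h :: t) (h :: t) h'.
Proof.
move=> H1 H2; rewrite /Dgen /term; apply: sum_filter_le0 => h' h't Ph' Ah'.
rewrite H1 // leq_add2l leq_mul2l; apply/orP; right.
apply: sum_filter_le => x xt Px Bx; rewrite H2 //.
Qed.

Lemma Dgen_cons {T : eqType} (A B : pred T) (W1 : T -> pred T) (W2 : T -> T -> pred T) (h : T) (t : seq T) :
  Dgen A B W1 W2 (h :: t) (h :: t) =
  (if A h then term B W1 W2 (h :: t) (h :: t) h else 0) +
  \sum_(h' <- t | A h') term B W1 W2 (h :: t) (h :: t) h'.
Proof. by rewrite /Dgen big_cons; case: ifP. Qed.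

Lemma term_head {T : eqType} (B : pred T) (W1 : T -> pred T) (W2 : T -> T -> pred T) (h : T) (t : seq T) :
  W1 h h -> (forall x, B x -> W2 h x h) ->
  term B W1 W2 (h :: t) (h :: t) h = 1 + 4 * count B (h :: t).
Proof.
move=> w1 w2; rewrite /term firstin_hit // -sum1_count; congr (_ + 4 * _).
by apply: eq_bigr => x Bx; rewrite firstin_hit // w2.
Qed.

Lemma arith_left (k c B D R : nat) : B <= D + 2 -> D <= R -> k <= c ->
  4 * k.+1 + 1 + B <= 1 + 4 * (true + c) + R + 2.
Proof. lia. Qed.

Lemma firstin_g {d} {T : orderType d} (h : T) t y (W : pred T) :
  (forall z, W z -> (h < z)%O) -> firstin [seq x <- t | (h <= x)%O] y W = firstin (h :: t) y W.
Proof.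
move=> Wh; rewrite firstin_filter ?firstin_skip //.
  by apply/negP => /Wh; rewrite ltxx.
by move=> z /Wh /ltW.
Qed.

Lemma firstin_s {d} {T : orderType d} (h : T) t y (W : pred T) :
  (forall z, W z -> (z < h)%O) -> firstin [seq x <- t | (x < h)%O] y W = firstin (h :: t) y W.
Proof.
move=> Wh; rewrite firstin_filter ?firstin_skip //.
by apply/negP => /Wh; rewrite ltxx.
Qed.

Lemma left_bound {d} {T : orderType d} (M1 : memo T) (a : T) : closed1 M1 ->
  forall n (l : seq T) f, size l <= n -> l \in keys M1 -> uniq l -> a \notin l -> size l < f ->
  Bnd M1 f [seq x <- l | (x < a)%O] <= DL a l l + 2.
Proof.
move=> cM; elim=> [|n IH] [|h t] f //= sz kl u an lf; try exact: leq_trans (Bnd_nil _ _) (leq_addl _ _).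
case: f lf => [|f] // lf.
have [cs cg] := cM _ kl.
move: u => /andP [ht ut]; move: an; rewrite inE negb_or => /andP [ah aT].
case ha: (h < a)%O.
- apply: (leq_trans (Bnd_cons _ _ _ _)).
  rewrite filter_sub; last by move=> x /= xh; apply: lt_trans xh ha.
  case: f lf => [|f] // lf.
  rewrite Bnd_hit //.
  rewrite filter_comm.
  have aG : a \notin [seq x <- t | (h <= x)%O] by rewrite mem_filter negb_and aT orbT.
  have IHg := IH [seq x <- t | (h <= x)%O] f.+1 (leq_trans (size_filter_le _ _) sz) cg
     (filter_uniq _ ut) aG
     (leq_ltn_trans (size_filter_le _ _) (lf : size t < f.+1)).
  rewrite /DL Dgen_cons ha term_head; last first.
  + by move=> x _; rewrite ge_min lexx orbT ha.
  + by rewrite lexx ha.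
  rewrite [size _]/= size_filter [count _ (_ :: _)]/= ha.
  Show.  apply: (arith_left IHg) => //.
  have hlt : forall z, z \in t -> (h <= z)%O -> (h < z)%O.
    by move=> z zt hz; rewrite lt_neqAle hz andbT; apply: contraNneq ht => ->.
  rewrite /DL; apply: Dgen_sub.
  + move=> h' h't hh' _; apply: firstin_g => z /andP [h'z _].
    exact: lt_le_trans (hlt _ h't hh') h'z.
  + move=> h' x h't xt hh' _ hx _; apply: firstin_g => z /andP [mz _].
    by apply: lt_le_trans mz; rewrite lt_min hlt // hlt.
- have ahl : (a < h)%O by rewrite lt_neqAle ah leNgt ha.
  have -> : [seq x <- t | (x < a)%O] = [seq x <- [seq x <- t | (x < h)%O] | (x < a)%O].
    by rewrite filter_sub // => x /= xa; apply: lt_trans xa ahl.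
  have aS : a \notin [seq x <- t | (x < h)%O] by rewrite mem_filter negb_and aT orbT.
  have IHs := IH [seq x <- t | (x < h)%O] f.+1 (leq_trans (size_filter_le _ _) sz) cs
     (filter_uniq _ ut) aS (leq_ltn_trans (size_filter_le _ _) (ltnW lf)).
  apply: (leq_trans IHs); rewrite leq_add2r /DL Dgen_cons ha add0n.
  apply: Dgen_sub.
  + by move=> h' h't hh' _; apply: firstin_s => z /andP [_ za]; apply: lt_trans za ahl.
  + by move=> h' x h't xt hh' _ hx _; apply: firstin_s => z /andP [_ za]; apply: lt_trans za ahl.
Qed.

Lemma arith_right (k c B D R : nat) : B <= D + 2 -> D <= R -> k <= c ->
  4 * k.+1 + B + 1 <= 1 + 4 * (true + c) + R + 2.
Proof. lia. Qed.

Lemma right_bound {d} {T : orderType d} (M1 : memo T) (a : T) : closed1 M1 ->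
  forall n (l : seq T) f, size l <= n -> l \in keys M1 -> uniq l -> a \notin l -> size l < f ->
  Bnd M1 f [seq x <- l | (a <= x)%O] <= DR a l l + 2.
Proof.
move=> cM; elim=> [|n IH] [|h t] f //= sz kl u an lf; try exact: leq_trans (Bnd_nil _ _) (leq_addl _ _).
case: f lf => [|f] // lf.
have [cs cg] := cM _ kl.
move: u => /andP [ht ut]; move: an; rewrite inE negb_or => /andP [ah aT].
case ha: (a <= h)%O.
- have hb : (a < h)%O by rewrite lt_neqAle ah ha.
  apply: (leq_trans (Bnd_cons _ _ _ _)).
  rewrite [in X in _ + X]filter_sub; last by move=> x /= hx; apply: le_trans (ltW hb) hx.
  case: f lf => [|f] // lf.
  rewrite [in X in _ + X]Bnd_hit //.
  rewrite filter_comm.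
  have aS : a \notin [seq x <- t | (x < h)%O] by rewrite mem_filter negb_and aT orbT.
  have IHs := IH [seq x <- t | (x < h)%O] f.+1 (leq_trans (size_filter_le _ _) sz) cs
     (filter_uniq _ ut) aS
     (leq_ltn_trans (size_filter_le _ _) (lf : size t < f.+1)).
  rewrite /DR Dgen_cons hb term_head; last first.
  + by move=> x _; rewrite hb le_max lexx orbT.
  + by rewrite lexx hb.
  rewrite [size _]/= size_filter [count _ (_ :: _)]/= hb.
  apply: (arith_right IHs); last first.
    rewrite leq_eqVlt; apply/orP; left; apply/eqP; apply: eq_in_count => x xt /=.
    by rewrite lt_neqAle; case: eqP => // E; move: aT; rewrite E xt.
  have hlt : forall z, z \in t -> (z < h)%O -> (z < h)%O by [].
  apply: Dgen_sub.
  + move=> h' h't hh' _; apply: firstin_s => z /andP [_ zh'].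
    exact: le_lt_trans zh' hh'.
  + move=> h' x h't xt hh' _ hx _; apply: firstin_s => z /andP [_ mz].
    by apply: le_lt_trans mz _; rewrite gt_max hx hh'.
- have hla : (h < a)%O by rewrite ltNge ha.
  have -> : [seq x <- t | (a <= x)%O] = [seq x <- [seq x <- t | (h <= x)%O] | (a <= x)%O].
    by rewrite filter_sub // => x /= xa; apply: le_trans (ltW hla) xa.
  have aG : a \notin [seq x <- t | (h <= x)%O] by rewrite mem_filter negb_and aT orbT.
  have IHg := IH [seq x <- t | (h <= x)%O] f.+1 (leq_trans (size_filter_le _ _) sz) cg
     (filter_uniq _ ut) aG (leq_ltn_trans (size_filter_le _ _) (ltnW lf)).
  have hb : (a < h)%O = false by rewrite ltNge (ltW hla).
  apply: (leq_trans IHg); rewrite leq_add2r /DR Dgen_cons hb add0n.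
  apply: Dgen_sub.
  + by move=> h' h't hh' _; apply: firstin_g => z /andP [az _]; apply: lt_trans hla az.
  + by move=> h' x h't xt hh' _ hx _; apply: firstin_g => z /andP [az _]; apply: lt_trans hla az.
Qed.

Definition cnt {T : eqType} (K : seq T) (a h : T) (W : pred T) : nat :=
  \sum_(L <- permutations K) ((ohead L == Some a) && firstin L h W).
Definition Na {T : eqType} (K : seq T) (a : T) : nat :=
  \sum_(L <- permutations K) (ohead L == Some a).

Lemma perm_sum {T : eqType} (K : seq T) (s : T -> T) :
  involutive s -> perm_eq (map s K) K -> forall F : seq T -> nat,
  \sum_(L <- permutations K) F L = \sum_(L <- permutations K) F (map s L).
Proof.
move=> sK pK F; rewrite -(big_map (map s) (fun _ => true) F); apply: perm_big.
have inj : injective (map s) by apply: can_inj (mapK sK).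
apply: uniq_perm; first exact: permutations_uniq.
  by rewrite (map_inj_uniq inj) permutations_uniq.
move=> L; rewrite -{2}(mapK sK L) (mem_map inj) !mem_permutations.
apply/idP/idP => H.
  by apply: perm_trans (perm_map s H) pK.
apply: (perm_map_inj (can_inj sK)); apply: perm_trans H _; by rewrite perm_sym.
Qed.

Definition tsw {T : eqType} (h h' : T) (y : T) := if y == h then h' else if y == h' then h else y.

Lemma tswK {T : eqType} (h h' : T) : involutive (tsw h h').
Proof.
move=> y; rewrite /tsw; case: (y =P h) => [->|yh].
  by rewrite eqxx; case: (h' =P h) => // ->.
case: (y =P h') => [->|yh']; first by rewrite eqxx.
by do 2 (case: eqP => // ?).
Qed.

Lemma tsw_perm {T : eqType} (K : seq T) h h' : uniq K -> h \in K -> h' \in K ->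
  perm_eq (map (tsw h h') K) K.
Proof.
move=> uK hK h'K; apply: uniq_perm => //.
  by rewrite (map_inj_uniq (can_inj (tswK h h'))).
move=> y; rewrite -{1}(tswK h h' y) (mem_map (can_inj (tswK h h'))) /tsw.
case: (y =P h) => [->|]; first by rewrite hK h'K.
by case: (y =P h') => [->|]; [rewrite hK h'K|].
Qed.

Lemma omap_inv {T : eqType} (s : T -> T) (o : option T) b : involutive s ->
  (omap s o == Some b) = (o == Some (s b)).
Proof.
move=> sK; case: o => [x|] //=.
by rewrite -[x in RHS]sK !(inj_eq (@Some_inj _)) (inj_eq (can_inj sK)).
Qed.

Lemma cnt_sym {T : eqType} (K : seq T) a h h' (W : pred T) :
  uniq K -> h \in K -> h' \in K -> W h -> W h' -> ~~ W a -> cnt K a h W = cnt K a h' W.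
Proof.
move=> uK hK h'K Wh Wh' Wa; rewrite /cnt (perm_sum (tswK h h') (tsw_perm uK hK h'K)).
apply: eq_bigr => L _.
have ohm : forall s : seq T, ohead (map (tsw h h') s) = omap (tsw h h') (ohead s) by case.
have sa : tsw h h' a = a.
  rewrite /tsw; case: (a =P h) => [E|]; first by rewrite E Wh in Wa.
  by case: (a =P h') => [E|] //; rewrite E Wh' in Wa.
have fm : filter W (map (tsw h h') L) = map (tsw h h') (filter W L).
  rewrite filter_map; congr map; apply: eq_filter => y /=; rewrite /tsw.
  case: ifP => [/eqP ->|_]; first by rewrite Wh Wh'.
  by case: ifP => [/eqP ->|_] //; rewrite Wh Wh'.
rewrite /firstin fm !ohm !omap_inv ?sa //; last exact: tswK.
  by congr (_ && (_ == Some _)); rewrite /tsw eqxx.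
exact: tswK.
Qed.

Lemma cnt_le {T : eqType} (K : seq T) a h W : cnt K a h W <= Na K a.
Proof. by apply: leq_sum => L _; case: (ohead L == Some a); rewrite /= ?leq_b1. Qed.

Lemma sum_eq_mem {T : eqType} (K : seq T) z : uniq K -> \sum_(y <- K) (z == y) = (z \in K).
Proof.
elim: K => [|y K IH]; first by rewrite big_nil.
rewrite /= => /andP [yK uK]; rewrite big_cons IH // inE.
by case: (z =P y) => [->|] //=; rewrite (negbTE yK).
Qed.

Lemma sum_first {T : eqType} (K : seq T) L W : uniq K -> \sum_(h <- K) firstin L h W <= 1.
Proof.
move=> uK; rewrite /firstin; case: (ohead _) => [z|].
  have -> : \sum_(h <- K) (Some z == Some h) = \sum_(h <- K) (z == h).
    by apply: eq_bigr => h _; rewrite (inj_eq (@Some_inj _)).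
  by rewrite sum_eq_mem //; case: (z \in K).
by rewrite big1.
Qed.

Lemma sum_cnt {T : eqType} (K : seq T) a W : uniq K -> \sum_(h <- K) cnt K a h W <= Na K a.
Proof.
move=> uK; rewrite /cnt exchange_big /Na; apply: leq_sum => L _.
case: (ohead L == Some a) => /=; first exact: sum_first.
by rewrite big1.
Qed.

Lemma sum_cond_le {T : Type} (K : seq T) (P : pred T) (F : T -> nat) :
  \sum_(x <- K | P x) F x <= \sum_(x <- K) F x.
Proof. rewrite big_mkcond; apply: leq_sum => x _; by case: (P x). Qed.

Lemma sum_bool {T : Type} (K : seq T) (P : pred T) : \sum_(x <- K) (P x : nat) = count P K.
Proof. by rewrite -sum1_count [RHS]big_mkcond; apply: eq_bigr => x _; case: (P x). Qed.

Lemma count_cnt {T : eqType} (K : seq T) a h (W : pred T) :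
  uniq K -> h \in K -> W h -> ~~ W a -> count W K * cnt K a h W <= Na K a.
Proof.
move=> uK hK Wh Wa; apply: leq_trans (sum_cnt a W uK).
rewrite -sum1_count big_distrl /=; apply: leq_trans (sum_cond_le _ W _).
rewrite big_seq_cond [X in _ <= X]big_seq_cond; apply: leq_sum => h' /andP [h'K Wh'].
by rewrite mul1n (cnt_sym uK hK h'K).
Qed.

Lemma eq_cnt {T : eqType} (K : seq T) a h (W W' : pred T) : W =1 W' -> cnt K a h W = cnt K a h W'.
Proof. by move=> E; rewrite /cnt; apply: eq_bigr => L _; rewrite /firstin (eq_filter E). Qed.

Lemma sum_const {T : Type} (K : seq T) (c : nat) : \sum_(x <- K) c = size K * c.
Proof. elim: K => [|x K IH]; first by rewrite big_nil. by rewrite big_cons IH mulSn. Qed.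

Lemma prob_bound {T : eqType} (K : seq T) a (A B : pred T) (W1 Wx : T -> pred T) (W2 : T -> T -> pred T) :
  uniq K -> (forall h, ~~ W1 h a) -> (forall h, A h -> W1 h h) ->
  (forall h x, B x -> (W1 h x /\ W2 h x =1 W1 h) \/ W2 h x =1 Wx x) ->
  \sum_(L <- permutations K) (ohead L == Some a) * Dgen A B W1 W2 K L <= 9 * size K * Na K a.
Proof.
move=> uK W1a W1h HW.
have -> : \sum_(L <- permutations K) (ohead L == Some a) * Dgen A B W1 W2 K L =
   \sum_(h <- K | A h) (cnt K a h (W1 h) + 4 * \sum_(x <- K | B x) cnt K a h (W2 h x)).
  rewrite /Dgen.
  under eq_bigr => L _ do rewrite big_distrr /=.
  rewrite exchange_big; apply: eq_bigr => h Ah.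
  under eq_bigr => L _ do rewrite mulnDr mulnCA big_distrr /=.
  rewrite big_split /= -big_distrr /=; congr (_ + 4 * _).
    by apply: eq_bigr => L _; rewrite mulnb.
  rewrite exchange_big; apply: eq_bigr => x _; apply: eq_bigr => L _; by rewrite mulnb.
have H2 : forall h, h \in K -> A h -> \sum_(x <- K | B x) cnt K a h (W2 h x) <=
     Na K a + \sum_(x <- K) cnt K a h (Wx x).
  move=> h hK Ah.
  apply: (@leq_trans (\sum_(x <- K | B x) ((W1 h x) * cnt K a h (W1 h) + cnt K a h (Wx x)))).
    apply: leq_sum => x Bx; case: (HW h x Bx) => [[w1 e]|e]; rewrite (eq_cnt _ _ _ e).
      by rewrite w1 mul1n leq_addr.
    exact: leq_addl.
  rewrite big_split /=; apply: leq_add; last exact: sum_cond_le.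
  apply: leq_trans (sum_cond_le _ _ _) _.
  rewrite -big_distrl /= sum_bool; apply: count_cnt => //; exact: W1h.
apply: (@leq_trans (\sum_(h <- K) (5 * Na K a + 4 * \sum_(x <- K) cnt K a h (Wx x)))).
  apply: leq_trans (sum_cond_le _ _ _); rewrite big_seq_cond [X in _ <= X]big_seq_cond.
  apply: leq_sum => h /andP [hK Ah]; have := H2 h hK Ah; have := cnt_le K a h (W1 h); lia.
rewrite big_split /= sum_const -big_distrr /= exchange_big.
have : \sum_(x <- K) \sum_(h <- K) cnt K a h (Wx x) <= size K * Na K a.
  rewrite -sum_const; apply: leq_sum => x _; exact: sum_cnt.
move=> H; apply: leq_trans (leq_add (leqnn _) (leq_mul (leqnn 4) H)) _.
lia.
Qed.

Lemma Dgen_s_cons {T : eqType} (A B : pred T) (W1 : T -> pred T) (W2 : T -> T -> pred T) r s a :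
  (forall h, ~~ W1 h a) -> (forall h x, ~~ W2 h x a) ->
  Dgen A B W1 W2 r (a :: s) = Dgen A B W1 W2 r s.
Proof.
move=> h1 h2; rewrite /Dgen; apply: eq_bigr => h _; rewrite firstin_skip //.
congr (_ + 4 * _); apply: eq_bigr => x _; by rewrite firstin_skip.
Qed.

Lemma Dgen_r_cons {T : eqType} (A B : pred T) (W1 : T -> pred T) (W2 : T -> T -> pred T) r s a :
  A a = false -> B a = false -> Dgen A B W1 W2 (a :: r) s = Dgen A B W1 W2 r s.
Proof.
move=> Aa Ba; rewrite /Dgen big_cons Aa; apply: eq_bigr => h _.
by rewrite big_cons Ba.
Qed.

Lemma Dgen_perm {T : eqType} (A B : pred T) (W1 : T -> pred T) (W2 : T -> T -> pred T) r r' s :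
  perm_eq r r' -> Dgen A B W1 W2 r s = Dgen A B W1 W2 r' s.
Proof.
move=> p; rewrite /Dgen (perm_big _ p); apply: eq_bigr => h _.
by rewrite (perm_big _ p).
Qed.

Lemma leq_sum_mem {T : eqType} (K : seq T) (F : T -> nat) x : x \in K -> F x <= \sum_(y <- K) F y.
Proof.
elim: K => [|y K IH] //; rewrite inE big_cons => /orP [/eqP ->|xK]; first exact: leq_addr.
exact: leq_trans (IH xK) (leq_addl _ _).
Qed.

Lemma sum_opt {T : eqType} (K : seq T) (o : option T) : uniq K -> \sum_(h <- K) (o == Some h) <= 1.
Proof.
move=> uK; case: o => [z|].
  have -> : \sum_(h <- K) (Some z == Some h) = \sum_(h <- K) (z == h).
    by apply: eq_bigr => h _; rewrite (inj_eq (@Some_inj _)).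
  by rewrite sum_eq_mem //; case: (z \in K).
by rewrite big1.
Qed.

Lemma per_bound {d} {T : orderType d} (K L' : seq T) : uniq K -> perm_eq L' K -> 0 < size K ->
  second_run_cost L' <= 4 * size K + 4 +
    \sum_(a <- K) (ohead L' == Some a) * (DL a K L' + DR a K L').
Proof.
move=> uK pK nK; case: L' pK => [|a L] pK.
  by move: (perm_size pK) nK => <-.
have uL' : uniq (a :: L) by rewrite (perm_uniq pK).
move: (uL') => /= /andP [aL uL].
have aK : a \in K by rewrite -(perm_mem pK) inE eqxx.
apply: leq_trans _ (leq_add (leqnn _) (leq_sum_mem (fun a' => (ohead (a :: L) == Some a') * (DL a' K (a :: L) + DR a' K (a :: L))) aK)).
rewrite /= eqxx mul1n.
have eDL : DL a L L = DL a K (a :: L).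
  rewrite /DL Dgen_s_cons; last by move=> h x; rewrite ltxx andbF.
    by rewrite -(@Dgen_r_cons _ (fun h => (h < a)%O) (fun x => (x < a)%O) _ _ L _ a (ltxx a) (ltxx a)); apply: Dgen_perm.
  by move=> h; rewrite ltxx andbF.
have eDR : DR a L L = DR a K (a :: L).
  rewrite /DR Dgen_s_cons; last by move=> h x; rewrite ltxx.
    by rewrite -(@Dgen_r_cons _ (fun h => (a < h)%O) (fun x => (a < x)%O) _ _ L _ a (ltxx a) (ltxx a)); apply: Dgen_perm.
  by move=> h; rewrite ltxx.
rewrite -eDL -eDR -(perm_size pK).
case E: (mqs_run [::] L) => [[r M1] c].
have := mqs_inv (size L).+1 L (isT : good ([::] : memo T)); rewrite /mqs_run in E; rewrite E => -[gM _ _].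
have := @mqs_closed _ _ (size L).+1 [::] L isT (fun k (kin : k \in [::]) => False_ind _ (notF kin)) (ltnSn _).
rewrite E => -[cM kL].
apply: (leq_trans (cost_le (size (a :: L)).+1 (a :: L) gM (fun k kM => kM))).
apply: (leq_trans (Bnd_cons _ _ _ _)).
have lb := left_bound cM (leqnn (size L)) kL uL aL (ltnSn _).
have rb := right_bound cM (leqnn (size L)) kL uL aL (ltnSn _).
move: lb rb; set x1 := Bnd _ _ _; set x2 := Bnd _ _ _; rewrite [size (a :: L)]/=.
lia.
Qed.

Theorem mainTheorem1 :
  exists C : nat,
    forall (d : Order.disp_t) (T : orderType d) (K : seq T),
      uniq K ->
      (\sum_(L' <- permutations K) second_run_cost L'
         <= C * size K * size (permutations K))%N.
Proof.
exists 30 => d T K uK.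
case nK: (size K) => [|n].
  rewrite big_seq big1 // => L'; rewrite mem_permutations => pL.
  by have := perm_size pL; rewrite nK; case: L' {pL}.
have nK0 : 0 < size K by rewrite nK.
rewrite -nK.
apply: (@leq_trans (\sum_(L' <- permutations K) (4 * size K + 4 +
     \sum_(a <- K) (ohead L' == Some a) * (DL a K L' + DR a K L')))).
  rewrite big_seq [X in _ <= X]big_seq; apply: leq_sum => L' pL; apply: per_bound => //.
  by rewrite -mem_permutations.
rewrite big_split /= sum_const exchange_big /=.
have HL : forall a, a \in K -> \sum_(L' <- permutations K) (ohead L' == Some a) * (DL a K L' + DR a K L')
    <= 18 * size K * Na K a.
  move=> a aK; under eq_bigr => L' _ do rewrite mulnDr.
  rewrite big_split /=.
  have hl := @prob_bound T K a (fun h => (h < a)%O) (fun x => (x < a)%O)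
     (fun h y => (h <= y)%O && (y < a)%O) (fun x y => (x <= y)%O && (y < a)%O)
     (fun h x y => (Order.min x h <= y)%O && (y < a)%O) uK.
  have hr := @prob_bound T K a (fun h => (a < h)%O) (fun x => (a < x)%O)
     (fun h y => (a < y)%O && (y <= h)%O) (fun x y => (a < y)%O && (y <= x)%O)
     (fun h x y => (a < y)%O && (y <= Order.max x h)%O) uK.
  have {}hl : \sum_(L <- permutations K) (ohead L == Some a) * DL a K L <= 9 * size K * Na K a.
    apply: hl.
    - by move=> h; rewrite ltxx andbF.
    - by move=> h ha; rewrite lexx ha.
    - move=> h x xa; case hx: (h <= x)%O.
        by left; split; [rewrite xa | move=> y; rewrite /= minEge hx].
      by right => y; rewrite /= minEge hx.
  have {}hr : \sum_(L <- permutations K) (ohead L == Some a) * DR a K L <= 9 * size K * Na K a.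
    apply: hr.
    - by move=> h; rewrite ltxx.
    - by move=> h ha; rewrite lexx ha.
    - move=> h x xa; case hx: (h <= x)%O.
        by right => y; rewrite /= maxEge hx.
      left; split; last by move=> y; rewrite /= maxEge hx.
      by rewrite xa /=; apply: ltW; rewrite ltNge hx.
  move: hl hr; set s1 := \sum_(_ <- _) _; set s2 := \sum_(_ <- _) _; lia.
have HN : \sum_(a <- K) Na K a <= size (permutations K).
  rewrite /Na exchange_big -sum1_size; apply: leq_sum => L _; exact: sum_opt.
have HS : \sum_(a <- K) \sum_(L' <- permutations K) (ohead L' == Some a) * (DL a K L' + DR a K L')
     <= 18 * size K * size (permutations K).
  apply: (@leq_trans (\sum_(a <- K) 18 * size K * Na K a)).
    by rewrite big_seq [X in _ <= X]big_seq; apply: leq_sum => a aK; apply: HL.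
  by rewrite -big_distrr /= leq_mul2l HN orbT.
apply: leq_trans (leq_add (leqnn _) HS) _.
move: nK0; set m := size K; set p := size (permutations K); nia.
Qed.
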